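(* Let $n\ge 2$ and for $a\in\{-1,1\}^n$ put $\pi(a)=|\{i\in\{1,\dots,n\}:a_i=1\}|-1$. Let $Q\subseteq\mathbb{R}^{n+1}$ be the set of $(x,x_{n+1})\in\mathbb{R}^n\times\mathbb{R}$ satisfying $ax-\pi(a)x_{n+1}\le 1$ for all $a\in\{-1,1\}^n$, together with $0\le x_{n+1}\le 2$. Then: (i) $Q$ is a polytope all of whose vertices are integral (its vertices with $x_{n+1}=0$ are $(\pm u_i,0)$ and those with $x_{n+1}=2$ are $(\mathbf{1}\pm(n-1)u_i,2)$, $u_i$ the unit vectors); (ii) $Q$ contains no integer point in its interior; (iii) for each of the $2^n+2$ defining inequalities there is an integer point of $Q$ satisfying this inequality with equality and all other defining inequalities strictly; in particular each defining inequality defines a facet of $Q$ containing an integer point in its relative interior.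
   Context: $\mathbf{1}$ denotes the all-ones vector in $\mathbb{R}^n$ and $u_1,\dots,u_n$ the standard unit vectors of $\mathbb{R}^n$. *)

(* Defs.v *)
From HB Require Import structures.
From mathcomp Require Import all_boot all_order all_algebra.
Set Implicit Arguments. Unset Strict Implicit. Unset Printing Implicit Defensive.
Import Order.TTheory GRing.Theory Num.Theory.
Local Open Scope ring_scope.

Section Defs.
Variables (R : realFieldType) (n : nat).

Definition pt := ('rV[R]_n * R)%type.

(* sign vector a in {-1,1}^n, coded by a boolean function: a_i = 1 iff a i *)
Definition sgnv (a : {ffun 'I_n -> bool}) (i : 'I_n) : R := if a i then 1 else -1.

Definition piv (a : {ffun 'I_n -> bool}) : R := (#|[set i | a i]|)%:R - 1.

(* index set of the 2^n + 2 defining inequalities: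
   inl a  :  a x - pi(a) x_{n+1} <= 1
   inr false : -x_{n+1} <= 0      (i.e. 0 <= x_{n+1})
   inr true  :  x_{n+1} <= 2 *)
Definition ineq_idx := ({ffun 'I_n -> bool} + bool)%type.

Definition ineq_lhs (k : ineq_idx) (p : pt) : R :=
  match k with
  | inl a => \sum_(i < n) sgnv a i * p.1 ord0 i - piv a * p.2
  | inr false => - p.2
  | inr true => p.2
  end.

Definition ineq_rhs (k : ineq_idx) : R :=
  match k with
  | inl _ => 1
  | inr false => 0
  | inr true => 2
  end.

Definition inQ (p : pt) : Prop := forall k, ineq_lhs k p <= ineq_rhs k.

Definition bounded_set (S : pt -> Prop) : Prop :=
  exists M : R, forall p, S p -> (forall i, `|p.1 ord0 i| <= M) /\ `|p.2| <= M.

Definition convcomb (l : R) (q r : pt) : pt :=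
  (l *: q.1 + (1 - l) *: r.1, l * q.2 + (1 - l) * r.2).

Definition is_vertex (S : pt -> Prop) (p : pt) : Prop :=
  S p /\ forall q r l, S q -> S r -> 0 < l -> l < 1 -> p = convcomb l q r -> q = r.

Definition is_integral (x : R) : Prop := exists z : int, x = z%:~R.

Definition int_point (p : pt) : Prop :=
  (forall i, is_integral (p.1 ord0 i)) /\ is_integral p.2.

Definition interior (S : pt -> Prop) (p : pt) : Prop :=
  exists eps : R, 0 < eps /\
    forall q : pt, (forall i, `|q.1 ord0 i - p.1 ord0 i| < eps) ->
      `|q.2 - p.2| < eps -> S q.

Definition unitv (i : 'I_n) : 'rV[R]_n := delta_mx ord0 i.
Definition onesv : 'rV[R]_n := const_mx 1.
Definition pm (s : bool) : R := if s then 1 else -1.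

End Defs.

(* Main.v *)
Require Import Defs.
From HB Require Import structures.
From mathcomp Require Import all_boot all_order all_algebra.
From Stdlib Require Import Ring Classical.
Import Order.TTheory GRing.Theory Num.Theory.
Local Open Scope ring_scope.

Section Aux.
Variables (R : realFieldType) (n : nat).
Hypothesis hn : (2 <= n)%N.
Implicit Types (rho l t : R) (a : {ffun 'I_n -> bool}) (y z : 'rV[R]_n) (i : 'I_n).

Definition RR := GRing.PzSemiRing.sort R.
Definition radd (x y : RR) : RR := x + y.
Definition rmul (x y : RR) : RR := x * y.
Definition ropp (x : RR) : RR := - x.
Definition rsub (x y : RR) : RR := x - y.
Definition r0 : RR := 0.
Definition r1 : RR := 1.
Lemma RT : @ring_theory RR r0 r1 radd rmul rsub ropp eq.
Proof. split=> *; rewrite /radd/rmul/rsub/ropp/r0/r1 //; [exact: add0r|exact: addrC|exact: addrA|exact: mul1r|exact: mulrC|exact: mulrA|exact: mulrDl|exact: subrr]. Qed.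
Add Ring Rr : RT.
Lemma raddE (x y : R) : x + y = radd x y. Proof. by []. Qed.
Lemma rmulE (x y : R) : x * y = rmul x y. Proof. by []. Qed.
Lemma roppE (x : R) : - x = ropp x. Proof. by []. Qed.
Lemma r0E : (0 : R) = r0. Proof. by []. Qed.
Lemma r1E : (1 : R) = r1. Proof. by []. Qed.
Lemma r2E : (2 : R) = 1 + 1. Proof. by []. Qed.
Ltac rring := move: (n%:R : R) => ?; rewrite ?r2E ?raddE ?rmulE ?roppE ?r0E ?r1E;
  match goal with |- @eq _ ?a ?b => change (@eq RR a b) end; ring.

Definition dot (a : {ffun 'I_n -> bool}) (y : 'rV[R]_n) := \sum_i sgnv R a i * y ord0 i.
Definition l1 (y : 'rV[R]_n) := \sum_i `|y ord0 i|.
Definition sgof (y : 'rV[R]_n) : {ffun 'I_n -> bool} := [ffun i => 0 <= y ord0 i].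
Definition cnt (a : {ffun 'I_n -> bool}) : R := (#|[set i | a i]|)%:R.

Lemma pivE a : piv R a = cnt a - 1. Proof. by []. Qed.

Lemma dot_le a y : dot a y <= l1 y.
Proof.
apply: ler_sum => i _; rewrite /sgnv; case: (a i); rewrite ?mul1r ?mulN1r ?ler_norm //.
by rewrite -normrN ler_norm.
Qed.

Lemma dot_sg y : dot (sgof y) y = l1 y.
Proof.
apply: eq_bigr => i _; rewrite /sgnv ffunE.
case: leP => h; first by rewrite mul1r ger0_norm.
by rewrite mulN1r ltr0_norm.
Qed.

Lemma l1_ge0 y : 0 <= l1 y.
Proof. by apply: sumr_ge0 => i _; rewrite normr_ge0. Qed.

Lemma l1_le y r : (forall a, dot a y <= r) <-> l1 y <= r.
Proof.
split; first by move=> h; rewrite -dot_sg h.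
by move=> h a; apply: le_trans (dot_le a y) h.
Qed.

Lemma sum_ind a : \sum_i (if a i then (1:R) else 0) = cnt a.
Proof.
rewrite -big_mkcond /= sumr_const /cnt cardsE.
by [].
Qed.

Lemma sum_sgnv a : \sum_i sgnv R a i = cnt a * 2 - n%:R.
Proof.
have -> : \sum_i sgnv R a i = \sum_i ((if a i then (1:R) else 0) * 2 - 1).
  by apply: eq_bigr => i _; rewrite /sgnv; case: (a i); rring.
by rewrite sumrB -mulr_suml sum_ind sumr_const card_ord.
Qed.

Lemma dotB a y z : dot a (y - z) = dot a y - dot a z.
Proof. by rewrite /dot -sumrB; apply: eq_bigr => i _; rewrite !mxE mulrBr. Qed.
Lemma dotD a y z : dot a (y + z) = dot a y + dot a z.
Proof. by rewrite /dot -big_split; apply: eq_bigr => i _; rewrite !mxE mulrDr. Qed.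
Lemma dotZ a c y : dot a (c *: y) = c * dot a y.
Proof. by rewrite /dot mulr_sumr; apply: eq_bigr => i _; rewrite !mxE mulrCA. Qed.
Lemma dot1 a : dot a (onesv R n) = cnt a * 2 - n%:R.
Proof. by rewrite -sum_sgnv; apply: eq_bigr => i _; rewrite !mxE mulr1. Qed.

Lemma l1Z c y : l1 (c *: y) = `|c| * l1 y.
Proof. by rewrite /l1 mulr_sumr; apply: eq_bigr => i _; rewrite !mxE normrM. Qed.

Lemma l1_coord y i : `|y ord0 i| <= l1 y.
Proof.
rewrite /l1 (bigD1 i) //= lerDl; by apply: sumr_ge0 => j _; rewrite normr_ge0.
Qed.

Lemma l1D y z : l1 (y + z) <= l1 y + l1 z.
Proof. rewrite /l1 -big_split; apply: ler_sum => i _; rewrite mxE; exact: ler_normD. Qed.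

Lemma l1_unit c i : l1 (c *: unitv R i) = `|c|.
Proof.
rewrite l1Z /l1 (bigD1 i) //= big1 => [|j hj]; rewrite /unitv mxE ?eqxx.
  by rewrite addr0 normr1 mulr1.
by rewrite (negbTE hj) /= ?andbF normr0.
Qed.


Lemma two_neq0 : (2 : R) != 0. Proof. by rewrite pnatr_eq0. Qed.

Lemma inQE x t : inQ ((x, t) : pt R n) <->
  [/\ 0 <= t, t <= 2 & l1 (x - (t/2) *: onesv R n) <= 1 + t/2 * (n%:R - 2)].
Proof.
have key a : (dot a x - piv R a * t <= 1) =
    (dot a (x - (t/2) *: onesv R n) <= 1 + t/2*(n%:R-2)).
  rewrite dotB dotZ dot1 pivE -[LHS]subr_ge0 -[RHS]subr_ge0.
  set h := t/2. have ht : t = h*2 by rewrite /h divfK // two_neq0.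
  congr (_ <= _); rewrite [in LHS]ht; rring.
split.
- move=> h; have h0 := h (inr false); have h2 := h (inr true).
  rewrite /= oppr_le0 in h0; split => //.
  apply/l1_le => a; rewrite -key; exact: (h (inl a)).
- case=> h0 h2 hl [a|[]] /=; last by rewrite oppr_le0.
  + by rewrite -/(dot a x) key; move/l1_le: hl; apply.
  + by [].
Qed.


Lemma pm2 s : pm R s * pm R s = 1.
Proof. by case: s; rewrite /pm ?mulr1 ?mulrNN ?mulr1. Qed.
Lemma pm_norm s : `|pm R s| = 1.
Proof. by case: s; rewrite /pm ?normrN normr1. Qed.
Lemma pm_abs (x : R) : pm R (0 <= x) * x = `|x|.
Proof. rewrite /pm; case: leP => h; first by rewrite mul1r ger0_norm. by rewrite mulN1r ltr0_norm. Qed.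

Lemma unit_entry (c : R) i j : ((c *: unitv R i) ord0 j) = if j == i then c else 0.
Proof. rewrite /unitv !mxE eqxx /=; case: eqP => _; by rewrite ?mulr1 ?mulr0. Qed.

Lemma pin {y rho i s} : l1 y <= rho -> rho <= pm R s * y ord0 i ->
  y = (pm R s * rho) *: unitv R i.
Proof.
move=> hl hr.
have hA : pm R s * y ord0 i <= `|y ord0 i|.
  by apply: le_trans (ler_norm _) _; rewrite normrM pm_norm mul1r.
have hyi : `|y ord0 i| = rho.
  apply/le_anti; rewrite (le_trans (l1_coord _ _) hl) /=; exact: le_trans hr hA.
have hpy : pm R s * y ord0 i = rho by apply/le_anti; rewrite hr -hyi hA.
have hrest : \sum_(j | j != i) `|y ord0 j| = 0.
  apply/le_anti; rewrite sumr_ge0 ?andbT => [|j _]; last exact: normr_ge0.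
  by move: hl; rewrite /l1 (bigD1 i) //= hyi -lerBrDl subrr.
apply/matrixP => a j; rewrite (ord1 a) unit_entry.
case: eqP => [->|/eqP hj].
  by rewrite -hpy mulrA pm2 mul1r.
by apply/normr0_eq0; apply: (psumr_eq0P _ hrest) => // k _; exact: normr_ge0.
Qed.

Lemma ball_ext (y1 y2 : 'rV[R]_n) rho i s l : l1 y1 <= rho -> l1 y2 <= rho -> 0 < l -> l < 1 ->
  (pm R s * rho) *: unitv R i = l *: y1 + (1 - l) *: y2 -> y1 = y2.
Proof.
move=> h1 h2 l0 l1' e.
have := congr1 (fun M : 'rV[R]_n => pm R s * M ord0 i) e.
rewrite unit_entry eqxx mulrA pm2 mul1r !mxE.
set A := pm R s * y1 ord0 i; set B := pm R s * y2 ord0 i.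
have hA : A <= rho.
  by apply: le_trans (ler_norm _) _; rewrite normrM pm_norm mul1r (le_trans (l1_coord _ _) h1).
have hB : B <= rho.
  by apply: le_trans (ler_norm _) _; rewrite normrM pm_norm mul1r (le_trans (l1_coord _ _) h2).
move=> er.
have e2 : l * (rho - A) = (1 - l) * (B - rho).
  rewrite er /A /B; move: (y1 ord0 i) (y2 ord0 i) (pm R s) => u v w; rring.
have hl1 : 0 < 1 - l by rewrite subr_gt0.
have eA : rho - A = 0.
  have p1 : 0 <= l * (rho - A) by apply: mulr_ge0; [exact: ltW | rewrite subr_ge0].
  have p2 : l * (rho - A) <= 0 by rewrite e2; apply: mulr_ge0_le0; [exact: ltW | rewrite subr_le0].
  have : l * (rho - A) = 0 by apply/le_anti; rewrite p1 p2.
  by move/eqP; rewrite mulf_eq0 (negbTE (lt0r_neq0 l0)) /= => /eqP.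
have eB : B = rho.
  apply/eqP; rewrite -subr_eq0; apply/eqP.
  have : (1 - l) * (B - rho) = 0 by rewrite -e2 eA mulr0.
  by move/eqP; rewrite mulf_eq0 (negbTE (lt0r_neq0 hl1)) /= => /eqP.
have eA' : rho <= A by move/eqP: eA; rewrite subr_eq0 => /eqP ->.
have eB' : rho <= B by rewrite eB.
by rewrite (pin h1 eA') (pin h2 eB').
Qed.


Lemma unit_ii i : unitv R i ord0 i = 1.
Proof. by rewrite /unitv mxE !eqxx. Qed.
Lemma unit_ij i j : j != i -> unitv R i ord0 j = 0.
Proof. by move=> h; rewrite /unitv mxE eqxx /= (negbTE h). Qed.

Lemma half_id (Y c E : R) : Y = 2^-1 * (Y + c * E) + (1 - 2^-1) * (Y + (- c) * E).
Proof.
set w := (2 : R)^-1. have hw : w * 2 = 1 by rewrite /w mulVf // two_neq0.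
have -> : 1 - w = w by rewrite -{1}hw; rring.
rewrite -{1}[Y]mul1r -hw; rring.
Qed.

Lemma scal_id (Y p r : R) : p * p = 1 -> r != 0 -> (p * Y) / r * (p * r) = Y.
Proof.
move=> hp hr; have -> : (p * Y) / r * (p * r) = (p * p) * Y * (r / r) by rring.
by rewrite hp mulfV // mul1r mulr1.
Qed.

Lemma ball_nonext {y rho} : 0 < rho -> l1 y <= rho ->
  (forall i s, y != (pm R s * rho) *: unitv R i) ->
  exists y1 y2 l, [/\ l1 y1 <= rho, l1 y2 <= rho, 0 < l, l < 1 &
                     y = l *: y1 + (1 - l) *: y2 /\ y1 != y2].
Proof.
move=> rp hl hv.
pose i0 : 'I_n := Ordinal (ltnW hn).
case: (ltrP (l1 y) rho) => hlt.
- set c := rho - l1 y.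
  have cp : 0 < c by rewrite subr_gt0.
  have cp' := ltW cp.
  exists (y + c *: unitv R i0), (y + (- c) *: unitv R i0), 2^-1.
  split.
  + apply: le_trans (l1D _ _) _; rewrite l1_unit gtr0_norm // /c addrC subrK //.
  + apply: le_trans (l1D _ _) _; rewrite l1_unit normrN gtr0_norm // /c addrC subrK //.
  + by rewrite invr_gt0 ltr0n.
  + by rewrite invf_lt1 ?ltr0n // ltr1n.
  + split.
    * apply/matrixP => a j; rewrite !mxE; exact: half_id.
    * apply/negP => /eqP/matrixP/(_ ord0 i0); rewrite !mxE !eqxx /= !mulr1 => /addrI e.
      by move: cp; rewrite {1}e oppr_gt0 ltNge cp'.
- have he : l1 y = rho by apply/le_anti; rewrite hl hlt.
  case: (boolP [exists i, y ord0 i != 0]) => [/existsP [i hi] | /existsPn hall]; last first.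
    have h0 : l1 y = 0.
      by rewrite /l1 big1 // => j _; rewrite (eqP (negbNE (hall j))) normr0.
    by move: rp; rewrite -he h0 ltxx.
  set s := 0 <= y ord0 i.
  case: (ltrP `|y ord0 i| rho) => hyi; last first.
    exfalso; have := hv i s.
    by rewrite -(pin hl (_ : rho <= pm R s * y ord0 i)) ?eqxx // pm_abs.
  set lam := `|y ord0 i| / rho.
  set v := (pm R s * rho) *: unitv R i.
  set z := y - lam *: v.
  have rp0 : rho != 0 by exact: lt0r_neq0.
  have lp : 0 < lam by rewrite divr_gt0 // normr_gt0.
  have lt1 : lam < 1 by rewrite ltr_pdivrMr // mul1r.
  have hl1 : 0 < 1 - lam by rewrite subr_gt0.
  have zi : z ord0 i = 0.
    rewrite /z /v /lam !mxE !eqxx /= mulr1 -pm_abs scal_id ?subrr //; exact: pm2.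
  exists v, ((1 - lam)^-1 *: z), lam; split => //.
  + by rewrite l1_unit normrM pm_norm mul1r gtr0_norm.
  + rewrite l1Z gtr0_norm ?invr_gt0 //.
    have hz : l1 z = rho - `|y ord0 i|.
      rewrite -he /l1 (bigD1 i) //= [X in _ = X - _](bigD1 i) //= zi normr0 add0r.
      rewrite (addrC `|y ord0 i|) addrK; apply: eq_bigr => j hj.
      by rewrite /z /v !mxE eqxx (negbTE hj) /= !mulr0 subr0.
    rewrite hz (_ : rho - _ = (1 - lam) * rho) ?mulKf ?lt0r_neq0 //.
    by rewrite mulrBl mul1r /lam divfK.
  + split.
    * by rewrite [(1 - lam) *: _]scalerA mulfV ?lt0r_neq0 // scale1r /z addrC subrK.
    * apply/negP => /eqP/matrixP/(_ ord0 i); rewrite /v !mxE !eqxx /= mulr1 (_ : y ord0 i - _ = 0) ?mulr0; last by move: zi; rewrite /z /v !mxE !eqxx /= mulr1.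
      move/eqP; rewrite mulf_eq0 (negbTE rp0) orbF => /eqP hp.
      by move: (pm2 s); rewrite hp mul0r => /eqP; rewrite eq_sym oner_eq0.
Qed.


Lemma inQ0 x : inQ ((x, 0) : pt R n) <-> l1 x <= 1.
Proof.
rewrite inQE mul0r scale0r subr0 mul0r addr0.
by split; [case | move=> h; split; rewrite ?lexx ?ler0n].
Qed.

Lemma inQ2 x : inQ ((x, 2) : pt R n) <-> l1 (x - onesv R n) <= n%:R - 1.
Proof.
rewrite inQE mulfV ?two_neq0 // scale1r mul1r (_ : 1 + (n%:R - 2) = n%:R - 1); last by rring.
by split; [case | move=> h; split; rewrite ?lexx ?ler0n].
Qed.

Lemma conv0 {u v : R} {l} : 0 <= u -> 0 <= v -> 0 < l -> l < 1 -> l * u + (1 - l) * v = 0 ->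
  u = 0 /\ v = 0.
Proof.
move=> ha hb l0 l1' e.
have hl1 : 0 < 1 - l by rewrite subr_gt0.
move/eqP: e; rewrite paddr_eq0; last first.
- exact: mulr_ge0 (ltW hl1) hb.
- exact: mulr_ge0 (ltW l0) ha.
move=> /andP [/eqP h1 /eqP h2]; split.
  by apply: (mulfI (lt0r_neq0 l0)); rewrite h1 mulr0.
by apply: (mulfI (lt0r_neq0 hl1)); rewrite h2 mulr0.
Qed.

Lemma vert_slice t (c : 'rV[R]_n) rho : 0 < rho ->
  (forall x, inQ ((x, t) : pt R n) <-> l1 (x - c) <= rho) ->
  (forall (q r : pt R n) l, inQ q -> inQ r -> 0 < l -> l < 1 -> t = l * q.2 + (1 - l) * r.2 ->
     q.2 = t /\ r.2 = t) ->
  forall p : pt R n, p.2 = t ->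
  is_vertex (@inQ R n) p <-> exists i s, p.1 = c + (pm R s * rho) *: unitv R i.
Proof.
move=> rp hS hT [x t'] /= ->; split.
- case=> hin hext; apply: NNPP => hne.
  have hv : forall i s, x - c != (pm R s * rho) *: unitv R i.
    move=> i s; apply/negP => /eqP e; apply: hne; exists i, s.
    by rewrite -e addrC subrK.
  have hl : l1 (x - c) <= rho by apply/hS.
  have [y1 [y2 [l [h1 h2 l0 l1' [e ne]]]]] := ball_nonext rp hl hv.
  have hq : inQ ((y1 + c, t) : pt R n) by apply/hS; rewrite addrK.
  have hr : inQ ((y2 + c, t) : pt R n) by apply/hS; rewrite addrK.
  have heq : (x, t) = convcomb l (y1 + c, t) (y2 + c, t).
    rewrite /convcomb /=; congr pair.
      rewrite !scalerDr addrACA -scalerDl [l + _]addrC subrK scale1r -e subrK //.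
    by rewrite -mulrDl [l + _]addrC subrK mul1r.
  have := hext _ _ l hq hr l0 l1' heq.
  by case=> /addIr e'; rewrite e' eqxx in ne.
- case=> i [s ->]; split.
  + by apply/hS; rewrite [c + _]addrC addrK l1_unit normrM pm_norm mul1r gtr0_norm.
  + move=> [qx qt] [rx rt] l hq hr l0 l1' e.
    have [/= hq2 hr2] := hT _ _ l hq hr l0 l1' (congr1 snd e).
    move: hq hr; rewrite /= in hq2 hr2; rewrite hq2 hr2 => /hS hq /hS hr.
    have e1 := congr1 fst e; rewrite /= in e1.
    have : qx - c = rx - c.
      apply: (@ball_ext _ _ rho i s l hq hr l0 l1').
      rewrite !scalerBr addrACA -opprD -scalerDl [l + _]addrC subrK scale1r -e1.
      by rewrite [c + _]addrC addrK.
    by move/addIr => ->.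
Qed.

Lemma vert0 (p : pt R n) : p.2 = 0 ->
  is_vertex (@inQ R n) p <-> exists i s, p.1 = pm R s *: unitv R i.
Proof.
move=> hp.
have hS : forall x, inQ ((x, 0) : pt R n) <-> l1 (x - 0) <= 1.
  by move=> x; rewrite subr0; exact: inQ0.
have hT : forall (q r : pt R n) l, inQ q -> inQ r -> 0 < l -> l < 1 ->
    0 = l * q.2 + (1 - l) * r.2 -> q.2 = 0 /\ r.2 = 0.
  move=> q r l hq hr l0 l1' e.
  have hq2 := hq (inr false); have hr2 := hr (inr false).
  rewrite /= oppr_le0 in hq2; rewrite /= oppr_le0 in hr2.
  by have [-> ->] := conv0 hq2 hr2 l0 l1' (esym e).
apply: iff_trans (@vert_slice 0 0 1 ltr01 hS hT p hp) _.
by split; case=> i [s e]; exists i, s; move: e; rewrite add0r mulr1.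
Qed.

Lemma nm1_gt0 : 0 < (n%:R : R) - 1.
Proof. by rewrite subr_gt0 ltr1n. Qed.

Lemma vert2 (p : pt R n) : p.2 = 2 ->
  is_vertex (@inQ R n) p <-> exists i s, p.1 = onesv R n + (pm R s * (n%:R - 1)) *: unitv R i.
Proof.
move=> hp; apply: (@vert_slice 2 _ _ nm1_gt0 inQ2 _ p hp).
move=> q r l hq hr l0 l1' e.
have hq2 := hq (inr true); have hr2 := hr (inr true).
rewrite /= -subr_ge0 in hq2; rewrite /= -subr_ge0 in hr2.
have e' : l * (2 - q.2) + (1 - l) * (2 - r.2) = 0.
  by rewrite [X in X - q.2]e [X in X - r.2]e; rring.
have [a b] := conv0 hq2 hr2 l0 l1' e'.
move/eqP: a; rewrite subr_eq0 => /eqP a; move/eqP: b; rewrite subr_eq0 => /eqP b.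
by split.
Qed.


Lemma vert_mid (p : pt R n) : is_vertex (@inQ R n) p -> p.2 = 0 \/ p.2 = 2.
Proof.
case: p => x t [hin hext] /=.
have [h0 h2 hl] := (inQE x t).1 hin.
case: (eqVneq t 0) => [->|t0]; first by left.
case: (eqVneq t 2) => [->|t2]; first by right.
exfalso.
have tp : 0 < t by rewrite lt0r t0 h0.
have tl : t < 2 by rewrite lt_neqAle t2 h2.
set h := t / 2.
have hp : 0 < h by rewrite divr_gt0 // ltr0n.
have h1 : h < 1 by rewrite ltr_pdivrMr ?ltr0n // mul1r.
set rho := 1 + h * (n%:R - 2).
have n2 : 0 <= (n%:R : R) - 2 by rewrite subr_ge0 ler_nat.
have rp : 0 < rho.
  by rewrite /rho (lt_le_trans ltr01) // lerDl mulr_ge0 // ltW.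
set w := rho^-1 *: (x - h *: onesv R n).
have hw : l1 w <= 1.
  by rewrite /w l1Z gtr0_norm ?invr_gt0 // mulrC ler_pdivrMr // mul1r.
have hq : inQ ((w, 0) : pt R n) by apply/inQ0.
have hr : inQ ((onesv R n + (n%:R - 1) *: w, 2) : pt R n).
  apply/inQ2; rewrite [onesv R n + _]addrC addrK l1Z ger0_norm ?(ltW nm1_gt0) //.
  by rewrite -{2}[n%:R - 1]mulr1 ler_pM2l ?nm1_gt0.
have l0 : 0 < 1 - h by rewrite subr_gt0.
have l1' : 1 - h < 1 by rewrite ltrBlDr ltrDl.
have heq : (x, t) = convcomb (1 - h) (w, 0) (onesv R n + (n%:R - 1) *: w, 2).
  rewrite /convcomb /=; congr pair.
    apply/matrixP => a j; rewrite (ord1 a) !mxE.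
    move: (x ord0 j) => X.
    set u := rho^-1.
    rewrite (_ : _ + _ = h + (X - h * 1) * (u * rho)); last by rewrite /rho; rring.
    by rewrite /u mulVf ?lt0r_neq0 // !mulr1 addrC subrK.
  rewrite (_ : 1 - (1 - h) = h); last by rring.
  by rewrite mulr0 add0r /h divfK // two_neq0.
have [_ e] := hext _ _ (1 - h) hq hr l0 l1' heq.
by move/eqP: e; rewrite eq_sym (negbTE two_neq0).
Qed.


Lemma int0 : is_integral (0 : R). Proof. by exists 0. Qed.
Lemma int1 : is_integral (1 : R). Proof. by exists 1. Qed.
Lemma intn m : is_integral (m%:R : R). Proof. by exists m%:Z. Qed.
Lemma intD (u v : R) : is_integral u -> is_integral v -> is_integral (u + v).
Proof. by case=> a -> [b ->]; exists (a + b); rewrite intrD. Qed.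
Lemma intM (u v : R) : is_integral u -> is_integral v -> is_integral (u * v).
Proof. by case=> a -> [b ->]; exists (a * b); rewrite intrM. Qed.
Lemma intN (u : R) : is_integral u -> is_integral (- u).
Proof. by case=> a ->; exists (- a); rewrite intrN. Qed.
Lemma intpm s : is_integral (pm R s).
Proof. by case: s; rewrite /pm; [exact: int1 | apply: intN; exact: int1]. Qed.
Lemma intb (b : bool) : is_integral (b%:R : R).
Proof. exact: intn. Qed.

Lemma bounded : bounded_set (@inQ R n).
Proof.
exists (n%:R + 2) => -[x t] hin /=.
have [h0 h2 hl] := (inQE x t).1 hin.
have n2 : 0 <= (n%:R : R) - 2 by rewrite subr_ge0 ler_nat.
have hn0 : 0 <= (n%:R : R) by rewrite ler0n.
split; last by rewrite ger0_norm // (le_trans h2) // lerDr.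
move=> i.
set h := t / 2.
have hh0 : 0 <= h by rewrite divr_ge0 // ler0n.
have hh1 : h <= 1 by rewrite ler_pdivrMr ?ltr0n // mul1r.
have hrho : 1 + h * (n%:R - 2) <= n%:R - 1.
  apply: (@le_trans _ _ (1 + 1 * (n%:R - 2))); last by rewrite mul1r (_ : 1 + _ = n%:R - 1) //; rring.
  by rewrite lerD2l ler_wpM2r.
have hc : `|x ord0 i - h| <= n%:R - 1.
  apply: le_trans hrho; apply: le_trans hl.
  by apply: le_trans (l1_coord _ i); rewrite !mxE mulr1.
apply: (@le_trans _ _ (`|x ord0 i - h| + `|h|)).
  by rewrite (le_trans _ (ler_normD _ _)) // subrK.
apply: (@le_trans _ _ (n%:R - 1 + 1)); first by rewrite lerD // ger0_norm.
by rewrite subrK lerDl ler0n.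
Qed.

Lemma no_interior (p : pt R n) : int_point p -> ~ interior (@inQ R n) p.
Proof.
case: p => x t [hx [z ht]] [eps [ep hint]] /=; rewrite /= in ht.
set d := eps / 2.
have dp : 0 < d by rewrite divr_gt0 // ltr0n.
have de : d < eps by rewrite ltr_pdivrMr ?ltr0n // ltr_pMr // ltr1n.
have hx0 : forall i, `|x ord0 i - x ord0 i| < eps by move=> i; rewrite subrr normr0.
have q1 := hint (x, t + d) hx0; rewrite /= (addrC t d) addrK gtr0_norm // in q1.
have q2 := hint (x, t - d) hx0; rewrite /= (addrC t (- d)) addrK normrN gtr0_norm // in q2.
have tlt : t < 2 by have := (q1 de) (inr true); rewrite /= => h; apply: (lt_le_trans _ h); rewrite ltrDr.
have tgt : 0 < t.
  have := (q2 de) (inr false); rewrite /= oppr_le0 addrC subr_ge0 => h; exact: lt_le_trans dp h.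
have t1 : t = 1.
  move: tlt tgt; rewrite ht ltr0z gtz0_ge1 => tlt hz1.
  have hz2 : z <= 1.
    by rewrite -ltzD1 -(ltr_int R) (_ : ((1 + 1 : int)%:~R : R) = 2).
  by rewrite (_ : z = 1) //; apply/le_anti; rewrite hz1 hz2.
pose b : {ffun 'I_n -> bool} := [ffun i => 1 <= x ord0 i].
pose sv : 'rV[R]_n := \row_i sgnv R b i.
have hq := hint (x + d *: sv, t).
have : inQ ((x + d *: sv, t) : pt R n).
  apply: hq; last by rewrite subrr normr0.
  move=> i; rewrite !mxE (addrC (x ord0 i)) addrK normrM gtr0_norm //.
  by rewrite (_ : sgnv R b i = pm R (b i)) // pm_norm mulr1.
move/(_ (inl b)); rewrite /= -/(dot b _) dotD dotZ t1 mulr1 pivE.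
have hsv : dot b sv = n%:R.
  rewrite /dot (eq_bigr (fun=> 1)) ?sumr_const ?card_ord // => i _.
  by rewrite mxE (_ : sgnv R b i = pm R (b i)) // pm2.
have hD : cnt b <= dot b x.
  rewrite -sum_ind; apply: ler_sum => i _; rewrite /sgnv ffunE.
  case: (leP 1 (x ord0 i)) => hi; first by rewrite mul1r.
  rewrite mulN1r oppr_ge0; have [w hw] := hx i; move: hi; rewrite hw ltrz1 => hw1.
  by rewrite lerz0 -ltzD1 add0r.
rewrite hsv; apply/negP; rewrite -ltNge.
rewrite (_ : dot b x + d * n%:R - (cnt b - 1) = 1 + ((dot b x - cnt b) + d * n%:R)); last by rring.
rewrite ltrDl ltr_wpDl ?subr_ge0 // mulr_gt0 // ltr0n.
by apply: leq_trans hn.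
Qed.

Lemma tight_inQ (p : pt R n) k : ineq_lhs k p = ineq_rhs R k ->
  (forall k', k' <> k -> ineq_lhs k' p < ineq_rhs R k') -> inQ p.
Proof.
move=> e s k'; case: (eqVneq k' k) => [->|ne]; first by rewrite e.
by apply: ltW; apply: s; apply/eqP.
Qed.

Lemma facets (k : ineq_idx n) : exists p : pt R n,
  int_point p /\ inQ p /\ ineq_lhs k p = ineq_rhs R k /\
  forall k', k' <> k -> ineq_lhs k' p < ineq_rhs R k'.
Proof.
suff [p [ip [e s]]] : exists p : pt R n, int_point p /\ ineq_lhs k p = ineq_rhs R k /\
  forall k', k' <> k -> ineq_lhs k' p < ineq_rhs R k'.
  by exists p; split => //; split; [exact: tight_inQ e s | split].
case: k => [a|[]].
- pose xa : 'rV[R]_n := \row_i (if a i then 1 else 0).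
  have dxa : forall b, dot b xa = \sum_i (if a i then sgnv R b i else 0).
    by move=> b; apply: eq_bigr => i _; rewrite mxE; case: (a i); rewrite ?mulr1 ?mulr0.
  exists (xa, 1); split; [split|split].
  + by move=> i; rewrite mxE; case: (a i); [exact: int1 | exact: int0].
  + exact: int1.
  + rewrite /= -/(dot a _) dxa pivE (eq_bigr (fun i => if a i then 1 else 0)).
      by rewrite sum_ind; rring.
    by move=> i _; rewrite /sgnv; case: (a i).
  + move=> [b|[]] hne /=; [| by rewrite ltr1n | by rewrite oppr_lt0 ltr01].
    rewrite -/(dot b _) dxa pivE.
    have hb : b != a by apply/negP => /eqP e; apply: hne; rewrite e.
    have [i0 hi0] : exists i0, b i0 != a i0.
      case: (boolP [exists i, b i != a i]) => [/existsP //|/existsPn hall].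
      by case/negP: hb; apply/eqP/ffunP => i; apply/eqP/negbNE.
    have lt : \sum_i (if a i then sgnv R b i else 0) < cnt b.
      rewrite -sum_ind (bigD1 i0) //= [X in _ < X](bigD1 i0) //=.
      apply: ltr_leD.
        by move: hi0; rewrite /sgnv; case: (a i0); case: (b i0); rewrite //= ?ltr01 ?oppr_lt0 ?ltr01.
      apply: ler_sum => i _; rewrite /sgnv; case: (a i); case: (b i) => //.
      by rewrite oppr_le0 ler01.
    rewrite (_ : _ - _ = 1 + (\sum_i (if a i then sgnv R b i else 0) - cnt b)); last by rring.
    by rewrite gtrDl subr_lt0.
- exists (onesv R n, 2); split; [split|split].
  + by move=> i; rewrite mxE; exact: int1.
  + exact: intn.
  + by [].
  + move=> [b|[]] hne /=.
    * rewrite -/(dot b _) dot1 pivE.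
      rewrite (_ : _ - _ = 1 + (1 - n%:R)); last by rring.
      by rewrite gtrDl subr_lt0 ltr1n.
    * by case: hne.
    * by rewrite oppr_lt0 ltr0n.
- exists (0, 0); split; [split|split].
  + by move=> i; rewrite mxE; exact: int0.
  + exact: int0.
  + by rewrite /= oppr0.
  + move=> [b|[]] hne /=.
    * by rewrite mulr0 subr0 big1 ?ltr01 // => i _; rewrite mxE mulr0.
    * by rewrite ltr0n.
    * by case: hne.
Qed.

End Aux.


Theorem mainTheorem6 (R : realFieldType) (n : nat) (hn : (2 <= n)%N) :
  (* (i) Q is a polytope with integral vertices, described at x_{n+1} = 0, 2 *)
  (bounded_set (@inQ R n)
   /\ (forall p, is_vertex (@inQ R n) p -> int_point p)
   /\ (forall p : pt R n, p.2 = 0 ->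
         is_vertex (@inQ R n) p <->
         exists (i : 'I_n) (s : bool), p.1 = pm R s *: unitv R i)
   /\ (forall p : pt R n, p.2 = 2 ->
         is_vertex (@inQ R n) p <->
         exists (i : 'I_n) (s : bool),
           p.1 = onesv R n + (pm R s * (n%:R - 1)) *: unitv R i))
  (* (ii) no integer point in the interior of Q *)
  /\ (forall p : pt R n, int_point p -> ~ interior (@inQ R n) p)
  (* (iii) each defining inequality is tight at some integer point of Q that
     satisfies all other defining inequalities strictly *)
  /\ (forall k : ineq_idx n, exists p : pt R n,
         int_point p /\ inQ p /\ ineq_lhs k p = ineq_rhs R k /\
         forall k', k' <> k -> ineq_lhs k' p < ineq_rhs R k').
Proof.
split; [split; [exact: (bounded R n hn) | split; [|split]] | split].
- move=> p hv; case: (vert_mid R n hn p hv) => h.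
  + have [i [s e]] := (vert0 R n hn p h).1 hv.
    split; last by rewrite h; exact: int0.
    move=> j; rewrite e unit_entry; case: eqP => _; [exact: intpm | exact: int0].
  + have [i [s e]] := (vert2 R n hn p h).1 hv.
    split; last by rewrite h; exact: intn.
    move=> j; rewrite e !mxE; apply: intD; first exact: int1.
    apply: intM; first (apply: intM; [exact: intpm | apply: intD; [exact: intn | apply: intN; exact: int1]]).
    exact: intb.
- exact: (vert0 R n hn).
- exact: (vert2 R n hn).
- exact: (no_interior R n hn).
- exact: (facets R n hn).
Qed.
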